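(* Every straight domain is locally divided.
   Context: All rings are commutative with identity. An overring of a domain $A$ is a ring $B$ with $A\subseteq B\subseteq \operatorname{Frac}(A)$. A prime ideal $\mathfrak{p}$ of a domain $A$ is straight if for every overring $B$ of $A$, the $(A/\mathfrak{p})$-module $B/\mathfrak{p}B$ is torsion-free; $A$ is a straight domain if all its prime ideals are straight. A domain $A$ is divided if $\mathfrak{p}=\mathfrak{p}A_\mathfrak{p}$ for every prime ideal $\mathfrak{p}$, and locally divided if $A_\mathfrak{m}$ is divided for every maximal ideal $\mathfrak{m}$ of $A$. *)

(* Defs.v *)
From HB Require Import structures.
From mathcomp Require Import all_boot all_order all_algebra fraction.
Set Implicit Arguments. Unset Strict Implicit. Unset Printing Implicit Defensive.
Import Order.TTheory GRing.Theory Num.Theory.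
Local Open Scope ring_scope.

Section Generic.
Variable R : comNzRingType.

Definition is_subring (D : R -> Prop) : Prop :=
  D 1 /\ (forall x y, D x -> D y -> D (x - y)) /\ (forall x y, D x -> D y -> D (x * y)).

Definition is_ideal_in (D I : R -> Prop) : Prop :=
  (forall x, I x -> D x) /\ I 0 /\ (forall x y, I x -> I y -> I (x + y)) /\
  (forall r x, D r -> I x -> I (r * x)).

Definition is_prime_in (D P : R -> Prop) : Prop :=
  is_ideal_in D P /\ ~ P 1 /\
  (forall x y, D x -> D y -> P (x * y) -> P x \/ P y).

Definition is_maximal_in (D M : R -> Prop) : Prop :=
  is_ideal_in D M /\ ~ M 1 /\
  (forall J, is_ideal_in D J -> (forall x, M x -> J x) ->
     (forall x, J x <-> M x) \/ J 1).

Definition ext_ideal (I E : R -> Prop) : R -> Prop :=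
  fun z => exists s : seq (R * R),
    (forall q, q \in s -> I q.1 /\ E q.2) /\ z = \sum_(q <- s) q.1 * q.2.
End Generic.

Section InField.
Variable K : fieldType.

Definition localization_in (D P : K -> Prop) : K -> Prop :=
  fun z => exists x s, D x /\ D s /\ ~ P s /\ z = x / s.

Definition divided_in (D : K -> Prop) : Prop :=
  forall P, is_prime_in D P ->
    forall z, P z <-> ext_ideal P (localization_in D P) z.
End InField.

Section Domain.
Variable A : idomainType.
Local Notation K := {fraction A}.
Local Notation "x %:F" := (@tofrac A x).

Definition image_in_frac (I : A -> Prop) : K -> Prop :=
  fun z => exists a, I a /\ z = a%:F.

Definition fullA : A -> Prop := fun _ => True.

Definition overring (B : K -> Prop) : Prop :=
  is_subring B /\ forall a : A, B a%:F.

(* p is straight: for every overring B, B/pB is a torsion-free A/p-module,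
   i.e. for a in A \ p and b in B, a b in pB implies b in pB. *)
Definition straight_prime (p : A -> Prop) : Prop :=
  forall B, overring B ->
    forall (a : A) (b : K), ~ p a -> B b ->
      ext_ideal (image_in_frac p) B (a%:F * b) ->
      ext_ideal (image_in_frac p) B b.

Definition straight_domain : Prop :=
  forall p, is_prime_in fullA p -> straight_prime p.

Definition localization_at (m : A -> Prop) : K -> Prop :=
  localization_in (image_in_frac fullA) (image_in_frac m).

Definition locally_divided : Prop :=
  forall m, is_maximal_in fullA m -> divided_in (localization_at m).
End Domain.

(* Main.v *)
Require Import Defs.
From mathcomp Require Import all_boot all_order all_algebra fraction.
From Stdlib Require Import Classical.
Set Implicit Arguments. Unset Strict Implicit. Unset Printing Implicit Defensive.
Import GRing.Theory.
Local Open Scope ring_scope.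

Section Core.
Variable K : fieldType.
Variables (D : K -> Prop) (y : K).
Hypothesis D0 : D 0.
Hypothesis DD : forall x z, D x -> D z -> D (x + z).
Hypothesis DM : forall x z, D x -> D z -> D (x * z).

Definition G (S : K -> Prop) (k : nat) (z : K) :=
  exists d : nat -> K, (forall i, S (d i)) /\ z = \sum_(i < k.+1) d i * y ^+ i.

Section GS.
Variable S : K -> Prop.
Hypothesis S0 : S 0.
Hypothesis SD : forall x z, S x -> S z -> S (x + z).
Hypothesis SM : forall r x, D r -> S x -> S (r * x).

Lemma G0 k : G S k 0.
Proof. exists (fun _ => 0); split=> [i|]; first exact: S0. by rewrite big1 // => i _; rewrite mul0r. Qed.

Lemma GD k z1 z2 : G S k z1 -> G S k z2 -> G S k (z1 + z2).
Proof.
move=> [d1 [H1 ->]] [d2 [H2 ->]]; exists (fun i => d1 i + d2 i); split.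
  by move=> i; apply: SD.
by rewrite -big_split /=; apply: eq_bigr => i _; rewrite mulrDl.
Qed.

Lemma GM k r z : D r -> G S k z -> G S k (r * z).
Proof.
move=> Dr [d [H ->]]; exists (fun i => r * d i); split.
  by move=> i; apply: SM.
by rewrite mulr_sumr; apply: eq_bigr => i _; rewrite mulrA.
Qed.

Lemma Gmon k r i : S r -> (i <= k)%N -> G S k (r * y ^+ i).
Proof.
move=> Sr lik; exists (fun j => if j == i then r else 0); split.
  by move=> j; case: (j == i).
have ik : (i < k.+1)%N by [].
rewrite (bigD1 (Ordinal ik)) //= eqxx big1 ?addr0 // => j /negbTE.
by move=> H; rewrite -(inj_eq val_inj) /= in H; rewrite H mul0r.
Qed.

Lemma Gsum k (I : Type) (r : seq I) (F : I -> K) :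
  (forall i, G S k (F i)) -> G S k (\sum_(i <- r) F i).
Proof.
move=> HF; apply: (big_ind (G S k)); [exact: G0 | exact: GD | by move=> i _].
Qed.
End GS.
End Core.

Section Core2.
Variable K : fieldType.
Variables (D P : K -> Prop) (y : K).
Hypothesis D0 : D 0.
Hypothesis D1 : D 1.
Hypothesis DD : forall x z, D x -> D z -> D (x + z).
Hypothesis DM : forall x z, D x -> D z -> D (x * z).
Hypothesis P0 : P 0.
Hypothesis PD : forall x z, P x -> P z -> P (x + z).
Hypothesis PM : forall r x, D r -> P x -> P (r * x).
Hypothesis PsubD : forall x, P x -> D x.
Hypothesis P1 : ~ P 1.
Hypothesis Punit : forall x, P x -> D ((1 - x)^-1).

Hypothesis H1 : exists N (g : nat -> K), (forall i, P (g i)) /\ y = \sum_(i < N) g i * y ^+ i.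
Hypothesis H2 : exists n, G y D n (y ^+ n.+1).

Let GDM k r z : D r -> G y D k z -> G y D k (r * z).
Proof. by apply: GM. Qed.
Let GPM k r z : D r -> G y P k z -> G y P k (r * z).
Proof. by apply: GM. Qed.

Let GDsum k (I : Type) (r : seq I) (F : I -> K) :
  (forall i, G y D k (F i)) -> G y D k (\sum_(i <- r) F i).
Proof. exact: Gsum. Qed.
Let GPsum k (I : Type) (r : seq I) (F : I -> K) :
  (forall i, G y P k (F i)) -> G y P k (\sum_(i <- r) F i).
Proof. exact: Gsum. Qed.
Let GDmon k r i : D r -> (i <= k)%N -> G y D k (r * y ^+ i).
Proof. exact: Gmon. Qed.

Lemma PG k r z : P r -> G y D k z -> G y P k (r * z).
Proof.
move=> Pr [d [H ->]]; exists (fun i => r * d i); split.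
  by move=> i; rewrite mulrC; apply: PM.
by rewrite mulr_sumr; apply: eq_bigr => i _; rewrite mulrA.
Qed.

Lemma stepA : exists n, forall j, G y D n (y ^+ j).
Proof.
case: H2 => n Hn; exists n; elim=> [|j [d [Hd Hj]]].
  by rewrite -[y ^+ 0]mul1r; apply: GDmon.
rewrite exprS Hj mulr_sumr; apply: GDsum.
move=> i; rewrite mulrCA -exprS.
case: (ltnP i n) => hi.
  by apply: GDmon.
have -> : i.+1 = n.+1 by have := ltn_ord i; rewrite ltnS => h; apply/eqP; rewrite eqSS eqn_leq h hi.
by apply: GDM.
Qed.

Lemma down k : (forall j, G y D k.+1 (y ^+ j)) -> (forall j, G y D k (y ^+ j)).
Proof.
move=> Hk.
have HP : G y P k.+1 (y ^+ k.+1).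
  case: H1 => N [g [Hg Hy]].
  rewrite exprSr [X in _ * X]Hy mulr_sumr; apply: GPsum.
  move=> i; rewrite mulrCA -exprD; apply: PG => //.
have Hk1 : G y D k (y ^+ k.+1).
  case: HP => p [Hp Hyk].
  move: (Hyk); rewrite big_ord_recr /= => Hyk'.
  have Hne : 1 - p k.+1 != 0.
    rewrite subr_eq0; apply/negP => /eqP E; apply: P1; rewrite E; exact: Hp.
  have -> : y ^+ k.+1 = (1 - p k.+1)^-1 * \sum_(i < k.+1) p i * y ^+ i.
    apply: (mulfI Hne); rewrite mulrA mulfV // mul1r mulrBl mul1r {1}Hyk'.
    by rewrite addrK.
  apply: GDM; first exact: Punit.
  by exists p; split => // i; apply: PsubD.
move=> j; case: (Hk j) => d [Hd ->].
apply: GDsum.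
move=> i; case: (ltnP i k.+1) => hi.
  by apply: GDmon.
have -> : (i : nat) = k.+1 by have := ltn_ord i; rewrite ltnS => h; apply/eqP; rewrite eqn_leq h hi.
by apply: GDM.
Qed.

Lemma coreD : D y.
Proof.
case: stepA => n; elim: n => [|n IH] Hn.
  case: (Hn 1%N) => d [Hd]; rewrite expr1 big_ord1 expr0 mulr1 => ->; exact: Hd.
by apply: IH; apply: down.
Qed.
End Core2.

Section H2sec.
Variable K : fieldType.
Variables (D P : K -> Prop) (y v : K).
Hypothesis D0 : D 0.
Hypothesis DD : forall x z, D x -> D z -> D (x + z).
Hypothesis DM : forall x z, D x -> D z -> D (x * z).
Hypothesis PsubD : forall x, P x -> D x.
Hypothesis P1 : ~ P 1.
Hypothesis Punit : forall x, P x -> D ((1 - x)^-1).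
Hypothesis vy : v * y = 1.

Lemma H2_of : (exists N (g : nat -> K), (forall i, P (g i)) /\ 1 = \sum_(i < N) g i * v ^+ i) ->
  exists n, G y D n (y ^+ n.+1).
Proof.
case=> N [g [Hg E]].
case: N E => [|k] E; first by move: E; rewrite big_ord0 => /eqP; rewrite oner_eq0.
have E2 : y ^+ k = \sum_(i < k.+1) g i * y ^+ (k - i).
  rewrite -[y ^+ k]mul1r {1}E mulr_suml; apply: eq_bigr => i _.
  rewrite -mulrA; congr (_ * _).
  have hi : (i <= k)%N by rewrite -ltnS.
  have -> : y ^+ k = y ^+ (k - i) * y ^+ i by rewrite -exprD subnK.
  by rewrite mulrCA -exprMn vy expr1n mulr1.
rewrite big_ord_recl /= subn0 in E2.
clear E; case: k E2 => [|n] E2.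
  by exfalso; apply: P1; move: E2; rewrite big_ord0 addr0 expr0 mulr1 => ->; exact: Hg.
exists n.
have Hne : 1 - g 0%N != 0.
  rewrite subr_eq0; apply/negP => /eqP E3; apply: P1; rewrite E3; exact: Hg.
have -> : y ^+ n.+1 = (1 - g 0%N)^-1 * \sum_(i < n.+1) g (lift ord0 i) * y ^+ (n.+1 - lift ord0 i).
  apply: (mulfI Hne); rewrite mulrA mulfV // mul1r mulrBl mul1r {1}E2.
  by rewrite addrC addKr.
apply: (GM (D:=D) (S:=D) DM); first by apply: Punit; exact: Hg.
apply: (Gsum D0 DD).
move=> i; apply: Gmon => //; first exact: PsubD.
by rewrite lift0 subSS leq_subr.
Qed.
End H2sec.

Section Main.
Variable A : idomainType.
Local Notation K := {fraction A}.
Local Notation "x %:F" := (@tofrac A x).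

Variable m : A -> Prop.
Hypothesis mmax : is_maximal_in (@fullA A) m.

Let mI : is_ideal_in (@fullA A) m. Proof. by case: mmax. Qed.
Let m0 : m 0. Proof. by case: mI => _ []. Qed.
Let mD x z : m x -> m z -> m (x + z). Proof. by case: mI => _ [_ []] H _; apply: H. Qed.
Let mM r x : m x -> m (r * x). Proof. by case: mI => _ [_ [_ H]]; apply: H. Qed.
Let m1 : ~ m 1. Proof. by case: mmax => _ []. Qed.

Lemma mprime x z : m (x * z) -> m x \/ m z.
Proof.
move=> Hxz; case: (classic (m x)) => Hx; first by left.
right.
pose J := fun w => exists u r, m u /\ w = u + x * r.
have JI : is_ideal_in (@fullA A) J.
  split; first by [].
  split; first by exists 0, 0; rewrite mulr0 addr0.
  split.
    move=> a b [u1 [r1 [H1 ->]]] [u2 [r2 [H2 ->]]].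
    exists (u1 + u2), (r1 + r2); split; first exact: mD.
    by rewrite mulrDr addrACA.
  move=> r a _ [u [s [Hu ->]]]; exists (r * u), (r * s); split; first exact: mM.
  by rewrite mulrDr mulrCA.
case: mmax => _ [_ Hmax].
case: (Hmax J JI).
- by move=> u Hu; exists u, 0; rewrite mulr0 addr0.
- move=> HJ; exfalso; apply: Hx; apply/HJ; exists 0, 1; rewrite mulr1 add0r.
  split=> //.
- move=> [u [r [Hu E]]].
  have -> : z = z * u + (x * z) * r by rewrite (mulrC x z) -mulrA -mulrDr -E mulr1.
  apply: mD; first exact: mM.
  by rewrite mulrC; exact: mM.
Qed.

Let nz b : ~ m b -> b%:F != 0.
Proof. by move=> Hb; rewrite tofrac_eq0; apply/eqP => E; apply: Hb; rewrite E. Qed.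

Let D := localization_at m.

Lemma Dmk a b : ~ m b -> D (a%:F / b%:F).
Proof.
move=> Hb; exists a%:F, b%:F; split; first by exists a.
split; first by exists b.
split=> //; move=> [c [Hc /eqP]]; rewrite tofrac_eq => /eqP E; apply: Hb; by rewrite E.
Qed.

Lemma Dinv z : D z -> exists a b, ~ m b /\ z = a%:F / b%:F.
Proof.
move=> [x [s [[a [_ ->]] [[b [_ ->]] [Hb ->]]]]].
exists a, b; split=> //; move=> Hm; apply: Hb; by exists b.
Qed.

Lemma Da a : D a%:F.
Proof. by rewrite -[a%:F]divr1 -tofrac1; apply: Dmk. Qed.

Lemma D0 : D 0. Proof. by rewrite -tofrac0; apply: Da. Qed.
Lemma D1 : D 1. Proof. by rewrite -tofrac1; apply: Da. Qed.

Lemma DB x z : D x -> D z -> D (x - z).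
Proof.
move=> /Dinv [a1 [b1 [H1 ->]]] /Dinv [a2 [b2 [H2 ->]]].
have H : ~ m (b1 * b2) by case/mprime.
have -> : a1%:F / b1%:F - a2%:F / b2%:F = (a1 * b2 - a2 * b1)%:F / (b1 * b2)%:F.
  by rewrite tofracB !tofracM -mulNr addf_div ?nz // mulNr.
exact: Dmk.
Qed.

Lemma DM x z : D x -> D z -> D (x * z).
Proof.
move=> /Dinv [a1 [b1 [H1 ->]]] /Dinv [a2 [b2 [H2 ->]]].
have H : ~ m (b1 * b2) by case/mprime.
by rewrite mulf_div -!tofracM; apply: Dmk.
Qed.

Lemma DN x : D x -> D (- x).
Proof. by move=> Hx; rewrite -sub0r; apply: DB => //; exact: D0. Qed.

Lemma DD x z : D x -> D z -> D (x + z).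
Proof.
move=> Hx Hz; have -> : x + z = x - (- z) by rewrite opprK.
by apply: DB => //; apply: DN.
Qed.

Variable P : K -> Prop.
Hypothesis HP : is_prime_in D P.

Let PsubD x : P x -> D x. Proof. by case: HP => [[H _] _]; apply: H. Qed.
Let P0 : P 0. Proof. by case: HP => [[_ [H _]] _]. Qed.
Let PD x z : P x -> P z -> P (x + z). Proof. by case: HP => [[_ [_ [H _]]] _]; apply: H. Qed.
Let PM r x : D r -> P x -> P (r * x). Proof. by case: HP => [[_ [_ [_ H]]] _]; apply: H. Qed.
Let P1 : ~ P 1. Proof. by case: HP => _ []. Qed.
Let Ppr x z : D x -> D z -> P (x * z) -> P x \/ P z. Proof. by case: HP => _ [_ H]; apply: H. Qed.

Lemma Punit x : P x -> D ((1 - x)^-1).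
Proof.
move=> Px; have := PsubD Px => /Dinv [w [t [Ht Ex]]].
case: (classic (m w)) => Hw.
  have Htw : ~ m (t - w).
    move=> H; apply: Ht; have -> : t = (t - w) + w by rewrite subrK.
    exact: mD.
  have -> : (1 - x)^-1 = t%:F / (t - w)%:F.
    have E1 : 1 - x = (t%:F - w%:F) / t%:F by rewrite mulrBl (@divff _ t%:F) ?nz // Ex.
    by rewrite E1 invf_div tofracB.
  exact: Dmk.
exfalso; apply: P1.
have -> : 1 = (t%:F / w%:F) * x by rewrite Ex mulf_div (mulrC t%:F) divff // mulf_neq0 ?nz.
by apply: PM => //; apply: Dmk.
Qed.

Lemma Dsum (I : Type) (r : seq I) (F : I -> K) :
  (forall i, D (F i)) -> D (\sum_(i <- r) F i).
Proof. by move=> HF; apply: (big_ind D D0 DD) => i _. Qed.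

Definition PR (S : K -> Prop) (v : K) : K -> Prop :=
  fun z => exists f : {poly K}, (forall i, S f`_i) /\ z = f.[v].

Lemma PR_over v : overring (PR D v).
Proof.
have DC c i : D c -> D (c%:P)`_i by move=> Dc; rewrite coefC; case: (i == 0)%N => //; exact: D0.
split; last by move=> a; exists (a%:F)%:P; split; [move=> i; apply: DC; exact: Da | by rewrite hornerC].
split; first by exists 1; split; [move=> i; apply: DC; exact: D1 | by rewrite hornerC].
split.
  move=> x z [f [Hf ->]] [g [Hg ->]]; exists (f - g); split; last by rewrite hornerD hornerN.
  by move=> i; rewrite coefB; apply: DB.
move=> x z [f [Hf ->]] [g [Hg ->]]; exists (f * g); split; last by rewrite hornerM.
by move=> i; rewrite coefM; apply: Dsum => j; apply: DM.
Qed.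

Let p := fun x : A => P x%:F.

Lemma ext_PR v z : ext_ideal (image_in_frac p) (PR D v) z ->
  exists g : {poly K}, (forall i, P g`_i) /\ z = g.[v].
Proof.
move=> [s [Hs ->]]; elim: s Hs => [|q s IH] Hs.
  by exists 0; split; [move=> i; rewrite coef0 | rewrite big_nil horner0].
have [[x [px Ex]] [f [Hf Ef]]] := Hs q (mem_head _ _).
have [g [Hg Eg]] : exists g : {poly K}, (forall i, P g`_i) /\ \sum_(q0 <- s) q0.1 * q0.2 = g.[v].
  by apply: IH => q' Hq'; apply: Hs; rewrite inE Hq' orbT.
exists (q.1 *: f + g); split.
  move=> i; rewrite coefD coefZ; apply: PD => //.
  by rewrite mulrC Ex; apply: PM.
by rewrite big_cons hornerD hornerZ Eg Ef.
Qed.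

Lemma p_prime : is_prime_in (@fullA A) p.
Proof.
split.
  split; first by [].
  split; first by rewrite /p tofrac0.
  split; first by move=> x z Hx Hz; rewrite /p tofracD; apply: PD.
  by move=> r x _ Hx; rewrite /p tofracM; apply: PM => //; exact: Da.
split; first by rewrite /p tofrac1.
by move=> x z _ _; rewrite /p tofracM; apply: Ppr; exact: Da.
Qed.

Lemma ext1 B c w : p c -> B w -> ext_ideal (image_in_frac p) B (c%:F * w).
Proof.
move=> pc Bw; exists [:: (c%:F, w)]; split; last by rewrite big_cons big_nil addr0.
by move=> q; rewrite inE => /eqP -> /=; split=> //; exists c.
Qed.

Lemma keyA (Hs : straight_domain A) c a : P c%:F -> ~ P a%:F -> D (c%:F / a%:F).
Proof.
move=> Pc Pa.
have Hst := Hs p p_prime.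
have anz : a%:F != 0 by apply/eqP => E; apply: Pa; rewrite E.
case: (eqVneq c%:F 0) => [-> | cnz]; first by rewrite mul0r; exact: D0.
set y := c%:F / a%:F.
pose v := a%:F / c%:F.
have vy : v * y = 1 by rewrite /v /y mulf_div (mulrC a%:F) divff // mulf_neq0.
apply: (coreD D0 D1 DD DM P0 PD PM PsubD P1 Punit).
- have B1 : PR D y 1 by exists 1; split; [move=> i; rewrite coefC; case: (i == 0)%N; [exact: D1|exact: D0] | by rewrite hornerC].
  have By : PR D y y.
    exists 'X; split; last by rewrite hornerX.
    by move=> i; rewrite coefX; case: (i == 1)%N; [exact: D1|exact: D0].
  have E := Hst _ (PR_over y) a y Pa By.
  have : ext_ideal (image_in_frac p) (PR D y) (a%:F * y).
    have -> : a%:F * y = c%:F * 1 by rewrite /y mulr1 mulrC mulfVK.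
    exact: ext1.
  move=> /E /ext_PR [g [Hg Eg]].
  by exists (size g), (fun i => g`_i); split => //; rewrite {1}Eg horner_coef.
- apply: (H2_of D0 DD DM PsubD P1 Punit vy).
  have B1 : PR D v 1 by exists 1; split; [move=> i; rewrite coefC; case: (i == 0)%N; [exact: D1|exact: D0] | by rewrite hornerC].
  have Bv : PR D v v.
    exists 'X; split; last by rewrite hornerX.
    by move=> i; rewrite coefX; case: (i == 1)%N; [exact: D1|exact: D0].
  have E := Hst _ (PR_over v) a 1 Pa B1.
  have : ext_ideal (image_in_frac p) (PR D v) (a%:F * 1).
    have -> : a%:F * 1 = c%:F * v by rewrite /v mulr1 mulrC divfK.
    exact: ext1.
  move=> /E /ext_PR [g [Hg Eg]].
  by exists (size g), (fun i => g`_i); split => //; rewrite {1}Eg horner_coef.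
Qed.

Lemma key (Hs : straight_domain A) x s : P x -> D s -> ~ P s -> D (x / s).
Proof.
move=> Px Ds Ps.
have [X [U [HU Ex]]] := Dinv (PsubD Px).
have [S [T [HT Es]]] := Dinv Ds.
have PT : ~ P T%:F.
  move=> H; apply: P1; have -> : 1 = (1%:F / T%:F) * T%:F by rewrite tofrac1 mul1r mulVf ?nz.
  by apply: PM => //; apply: Dmk.
have PX : P X%:F.
  have -> : X%:F = U%:F * x by rewrite Ex mulrC divfK ?nz.
  by apply: PM => //; exact: Da.
have PS : ~ P S%:F.
  move=> H; have : P (s * T%:F) by rewrite Es divfK ?nz.
  by case/Ppr => //; exact: Da.
have -> : x / s = (X%:F / S%:F) * (T%:F / U%:F).
  by rewrite Ex Es invf_div !mulf_div (mulrC U%:F).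
by apply: DM; [apply: keyA | apply: Dmk].
Qed.

Lemma dividedP (Hs : straight_domain A) z :
  P z <-> ext_ideal P (localization_in D P) z.
Proof.
split.
  move=> Pz; exists [:: (z, 1)]; split; last by rewrite big_cons big_nil mulr1 addr0.
  move=> q; rewrite inE => /eqP -> /=; split=> //.
  exists 1, 1; split; first exact: D1.
  split; first exact: D1.
  by split; [exact: P1 | rewrite divr1].
move=> [s [Hs' ->]]; elim: s Hs' => [|q s IH] Hs'.
  by rewrite big_nil.
rewrite big_cons; apply: PD; last by apply: IH => q' Hq'; apply: Hs'; rewrite inE Hq' orbT.
have [Pq [x [t [Dx [Dt [Pt Eq]]]]]] := Hs' q (mem_head _ _).
have tnz : t != 0 by apply/eqP => E; apply: Pt; rewrite E.
have Dqt := key Hs Pq Dt Pt.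
have Pqt : P (q.1 / t).
  have : P (t * (q.1 / t)) by rewrite mulrC divfK.
  by case/Ppr.
by rewrite Eq mulrCA; apply: PM.
Qed.
End Main.

Theorem corollary3p2 (A : idomainType) : straight_domain A -> locally_divided A.
Proof. by move=> Hs m Hm P HP z; apply: dividedP. Qed.
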